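(* Let $n\ge1$ and let $x_1\ge x_2\ge\dots\ge x_n$ be positive integers with $\sum_{i\in[n]}2^{-x_i}\ge 1$. Then there exists a family $\mathcal L=\{L_i\}_{i\in[n]}$ of sets of positive integers with $|L_i|=x_i$ for every $i\in[n]$ such that the discrete interval hypergraph $H_n$ does not admit a unique-maximum coloring from $\mathcal L$. (One such family is $L_i=\{c : x_1+1-x_i\le c\le x_1\}$.)
   Context: For $n\ge1$, $[n]=\{1,\dots,n\}$ and for $s\le t$ in $[n]$, $[s,t]=\{i: s\le i\le t\}$. The discrete interval hypergraph $H_n$ has vertex set $[n]$ and hyperedges all $[s,t]$ with $s\le t$, $s,t\in[n]$. A coloring $C\colon[n]\to\mathbb Z_{>0}$ is a unique-maximum coloring if in every hyperedge the maximum color is attained by exactly one vertex. $H_n$ admits a unique-maximum coloring from $\mathcal L$ if there is a unique-maximum coloring $C$ with $C(i)\in L_i$ for all $i$. *)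

(* Defs.v *)
From HB Require Import structures.
From mathcomp Require Import all_boot all_order all_algebra.
Set Implicit Arguments. Unset Strict Implicit. Unset Printing Implicit Defensive.

Definition unique_max_coloring (n : nat) (C : nat -> nat) : Prop :=
  (forall i, 1 <= i <= n -> 0 < C i) /\
  (forall s t, 1 <= s -> s <= t -> t <= n ->
     exists i, (s <= i <= t) /\
       (forall j, s <= j <= t -> j <> i -> C j < C i)).

Definition admits_um_coloring_from (n : nat) (L : nat -> seq nat) : Prop :=
  exists C, unique_max_coloring n C /\ (forall i, 1 <= i <= n -> C i \in L i).

(* Main.v *)
Require Import Defs.
From HB Require Import structures.
From mathcomp Require Import all_boot all_order all_algebra.
From Stdlib Require Import Lia.

Ltac slia :=
  repeat match goal with
  | H : is_true (_ && _) |- _ => let a := fresh "a" in let b := fresh "b" in destruct (andP H) as [a b]; clear H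
  | H : is_true (_ <= _) |- _ => let a := fresh "a" in pose proof (elimT leP H) as a; clear H
  end;
  repeat (apply/andP; split);
  try apply/leP;
  change addn with Nat.add in *; change subn with Nat.sub in *; change muln with Nat.mul in *;
  lia.
Import GRing.Theory Num.Theory.

Lemma key (n : nat) (C b : nat -> nat) :
  (forall s t, 1 <= s -> s <= t -> t <= n ->
     exists i, (s <= i <= t) /\
       (forall j, s <= j <= t -> j <> i -> C j < C i)) ->
  (forall j, 1 <= j <= n -> 2 * b j <= 2 ^ (C j) /\ 0 < C j) ->
  (forall i j, 1 <= i -> i <= j -> j <= n -> b i <= b j) ->
  forall k s e m v, e - s <= k -> 1 <= s -> s <= e -> e <= n.+1 ->
    v <= 2 ^ m -> (forall j, s <= j < e -> v <= b j) ->
    (forall j, s <= j < e -> C j <= m) ->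
    \sum_(s <= j < e) b j + v <= 2 ^ m.
Proof.
move=> UM Hb Hmono; elim=> [|k IH] s e m v Hk Hs Hse He Hv Hvb HC.
  have -> : e = s by apply/eqP; rewrite eqn_leq Hse andbT -subn_eq0 -leqn0.
  by rewrite big_geq.
case: (ltnP s e) => [Hlt|Hge]; last by rewrite big_geq.
case: e Hk Hse He Hvb HC Hlt => [//|e] Hk Hse He Hvb HC Hlt.
have [i [/andP [Hsi Hie] Hmax]] : exists i, (s <= i <= e) /\
       (forall j, s <= j <= e -> j <> i -> C j < C i).
  by apply: UM => //; slia.
have Hie' : i < e.+1 by slia.
have [Hbi Hci] : 2 * b i <= 2 ^ (C i) /\ 0 < C i by apply: Hb; slia.
set c := C i in Hbi Hci Hmax.
have Hc : 2 ^ c = 2 * 2 ^ c.-1 by rewrite -expnS prednK.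
have HbiP : b i <= 2 ^ c.-1 by rewrite -(leq_pmul2l (isT : 0 < 2)) -Hc.
have Hcm : c <= m by apply: HC; slia.
rewrite (big_cat_nat Hsi (ltnW Hie')) /= (big_ltn Hie') /=.
have HL : \sum_(s <= j < i) b j + v <= 2 ^ c.-1.
  apply: IH => //; try slia.
  - by apply: leq_trans (Hvb i _) HbiP; slia.
  - by move=> j Hj; apply: Hvb; slia.
  - move=> j Hj; rewrite -ltnS prednK //; apply: Hmax; slia.
have HR : \sum_(i.+1 <= j < e.+1) b j + b i <= 2 ^ c.-1.
  apply: IH => //; try slia.
  - by move=> j Hj; apply: Hmono; slia.
  - move=> j Hj; rewrite -ltnS prednK //; apply: Hmax; slia.
have : 2 ^ c <= 2 ^ m by apply: leq_pexp2l.
move=> Hcm2; slia.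
Qed.

Theorem theorem2p6 (n : nat) (x : nat -> nat)
  (hn : (1 <= n)%N)
  (hpos : forall i, (1 <= i <= n)%N -> (0 < x i)%N)
  (hdec : forall i j, (1 <= i)%N -> (i <= j)%N -> (j <= n)%N -> (x j <= x i)%N)
  (hsum : (1 <= \sum_(1 <= i < n.+1) ((2 ^ x i)%:R : rat)^-1)%R) :
  exists L : nat -> seq nat,
    (forall i, (1 <= i <= n)%N ->
       [/\ uniq (L i), size (L i) = x i & all (fun c => 0 < c)%N (L i)]) /\
    ~ admits_um_coloring_from n L.
Proof.
have hx1 : forall i, (1 <= i <= n)%N -> (x i <= x 1)%N.
  by move=> i /andP [H1 H2]; apply: hdec.
exists (fun i => iota (x 1 + 1 - x i) (x i)); split.
  move=> i Hi; have := hx1 i Hi => Hxi; split.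
  - exact: iota_uniq.
  - exact: size_iota.
  - by apply/allP => c; rewrite mem_iota => Hc; slia.
move=> [C [[Cpos UM] HCL]].
pose b := fun j => (2 ^ (x 1 - x j))%N.
have Hcol : forall j, (1 <= j <= n)%N -> (x 1 + 1 - x j <= C j < x 1 + 1)%N.
  move=> j Hj; have := HCL j Hj; rewrite mem_iota => H; have := hx1 j Hj => ?; slia.
have := @key n C b UM _ _ n.+1 1 n.+1 (x 1) 1.
have Hfin : (2 ^ x 1 <= \sum_(1 <= j < n.+1) b j)%N.
  rewrite -(ler_nat rat) natr_sum.
  have := hsum; rewrite -(ler_pM2l (_ : 0 < (2 ^ x 1)%:R)%R); last first.
    by rewrite ltr0n expn_gt0.
  rewrite mulr1 mulr_sumr (eq_big_nat _ _ (F2 := fun j => ((b j)%:R : rat))) //.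
  move=> j Hj.
  have Hxj := hx1 j Hj.
  have E : (2 ^ x 1 = 2 ^ (x 1 - x j) * 2 ^ x j)%N by rewrite -expnD subnK.
  by rewrite E natrM mulfK // pnatr_eq0 -lt0n expn_gt0.
move=> Hk.
have HK : (\sum_(1 <= j < n.+1) b j + 1 <= 2 ^ x 1)%N.
  apply: Hk.
  - move=> j Hj; have := Hcol j Hj => Hc; split; last by apply: Cpos.
    rewrite /b -expnS; apply: leq_pexp2l => //; have := hx1 j Hj => ?; slia.
  - move=> i j Hi Hij Hj; rewrite /b; apply: leq_pexp2l => //.
    have := hdec i j Hi Hij Hj => ?; slia.
  - slia.
  - by [].
  - slia.
  - slia.
  - by rewrite expn_gt0.
  - by move=> j Hj; rewrite /b expn_gt0.
  - move=> j Hj; have Hj2 : (1 <= j <= n)%N by slia.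
    have := Hcol j Hj2 => ?; slia.
slia.
Qed.
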